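(* Let $(X,d)$ be a proper geodesic metric space with a fixed basepoint $x_0$, let $(T_X,d^* )$ be its end-approximating tree and $f:X\to T_X$, $f(x)=[x]$, the end-approximating map. Then for every proper ray $\gamma$ in $X$, $f\circ\gamma$ is a proper ray in $T_X$, the map $F:\mathrm{Ends}(X)\to\mathrm{Ends}(T_X)$ given by $F(\mathrm{end}(\gamma))=\mathrm{end}(f\circ\gamma)$ is well defined, and $F$ is a homeomorphism.
   Context: End-approximating tree: for $x,y\in X$ let $(x,y)_{x_0}=\frac12(d(x_0,x)+d(x_0,y)-d(x,y))$, let $S_{x,y}$ be the set of finite sequences $x=x_1,\ldots,x_n=y$ in $X$, set $(x,y)'_{x_0}=\sup_{S_{x,y}}\min_{1\leqslant i\leqslant n-1}(x_i,x_{i+1})_{x_0}$ and $d'(x,y)=d(x_0,x)+d(x_0,y)-2(x,y)'_{x_0}$ (a pseudometric). $T_X$ is the quotient $X/\sim$ where $x\sim y$ iff $d'(x,y)=0$, with metric $d^*([x],[y])=d'(x,y)$. A proper ray in a proper metric space $Y$ with basepoint $y_0$ is a continuous $\gamma:[0,\infty)\to Y$ such that $\gamma^{-1}(B(y_0,r))$ is bounded for every $r\geqslant 0$. Proper rays $\gamma_1,\gamma_2$ converge to the same end if for every $r\geqslant0$ there is $t\geqslant0$ with $\gamma_1([t,\infty))$ and $\gamma_2([t,\infty))$ in the same path component of $Y\setminus B(y_0,r)$; $\mathrm{end}(\gamma)$ denotes the equivalence class and $\mathrm{Ends}(Y)$ the set of classes. Its topology is induced by the convergence: $\mathrm{end}(\gamma_n)\to\mathrm{end}(\gamma)$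 iff for every $r\geqslant0$ there are reals $N_n$ such that $\gamma_n([N_n,\infty))$ and $\gamma([N_n,\infty))$ lie in the same path component of $Y\setminus B(y_0,r)$ for all sufficiently large $n$. The basepoint of $T_X$ is $[x_0]$. *)

(* Defs.v *)
From Stdlib Require Import Reals List Lra ClassicalEpsilon.
Open Scope R_scope.

Section MetricNotions.
Variables (Y : Type) (dY : Y -> Y -> R).

Definition is_metric : Prop :=
  (forall x y, dY x y = 0 <-> x = y) /\
  (forall x y, dY x y = dY y x) /\
  (forall x y z, dY x z <= dY x y + dY y z).

Definition is_open (U : Y -> Prop) : Prop :=
  forall x, U x -> exists e, 0 < e /\ forall y, dY x y < e -> U y.

Definition compact (K : Y -> Prop) : Prop :=
  forall (I : Type) (U : I -> Y -> Prop),
    (forall i, is_open (U i)) ->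
    (forall x, K x -> exists i, U i x) ->
    exists l : list I, forall x, K x -> exists i, In i l /\ U i x.

Definition closed_ball (y : Y) (r : R) : Y -> Prop := fun z => dY y z <= r.

Definition proper_space : Prop :=
  forall y r, compact (closed_ball y r).

Definition geodesic : Prop :=
  forall x y, exists c : R -> Y,
    c 0 = x /\ c (dY x y) = y /\
    forall s t, 0 <= s <= dY x y -> 0 <= t <= dY x y ->
      dY (c s) (c t) = Rabs (s - t).

Definition cont_on (I : R -> Prop) (c : R -> Y) : Prop :=
  forall t, I t -> forall eps, 0 < eps -> exists delta, 0 < delta /\
    forall s, I s -> Rabs (s - t) < delta -> dY (c s) (c t) < eps.

Definition path_conn (S : Y -> Prop) (a b : Y) : Prop :=
  exists c : R -> Y, cont_on (fun s => 0 <= s <= 1) c /\ c 0 = a /\ c 1 = b /\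
    forall s, 0 <= s <= 1 -> S (c s).

Definition same_path_comp (S A B : Y -> Prop) : Prop :=
  (exists a, A a) /\ (exists b, B b) /\
  forall a b, A a -> B b -> path_conn S a b.

Variable y0 : Y.

Definition outside_ball (r : R) : Y -> Prop := fun y => r <= dY y0 y.

Definition tail (g : R -> Y) (t : R) : Y -> Prop :=
  fun y => exists s, 0 <= s /\ t <= s /\ y = g s.

(** proper rays gamma : [0,oo) -> Y (values at negative times are irrelevant) *)
Definition proper_ray (g : R -> Y) : Prop :=
  cont_on (fun t => 0 <= t) g /\
  forall r, 0 <= r -> exists M, forall t, 0 <= t -> dY y0 (g t) < r -> t <= M.

Definition same_end (g1 g2 : R -> Y) : Prop :=
  forall r, 0 <= r -> exists t, 0 <= t /\
    same_path_comp (outside_ball r) (tail g1 t) (tail g2 t).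

Definition end_conv (gs : nat -> R -> Y) (g : R -> Y) : Prop :=
  forall r, 0 <= r -> exists N : nat -> R, exists K : nat, forall n, (K <= n)%nat ->
    same_path_comp (outside_ball r) (tail (gs n) (N n)) (tail g (N n)).

(** open subsets of Ends(Y), represented as saturated predicates on proper rays;
    the topology is the one induced by the convergence end_conv
    (a set is open iff every sequence converging to a point of it eventually
    lies in it). *)
Definition ends_open (U : (R -> Y) -> Prop) : Prop :=
  (forall g, U g -> proper_ray g) /\
  (forall g g', proper_ray g' -> same_end g g' -> U g -> U g') /\
  (forall (gs : nat -> R -> Y) g, (forall n, proper_ray (gs n)) -> proper_ray g ->
     end_conv gs g -> U g -> exists K : nat, forall n, (K <= n)%nat -> U (gs n)).

End MetricNotions.

Arguments is_metric {Y}. Arguments is_open {Y}. Arguments compact {Y}.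
Arguments closed_ball {Y}. Arguments proper_space {Y}. Arguments geodesic {Y}.
Arguments cont_on {Y}. Arguments path_conn {Y}. Arguments same_path_comp {Y}.
Arguments outside_ball {Y}. Arguments tail {Y}. Arguments proper_ray {Y}.
Arguments same_end {Y}. Arguments end_conv {Y}. Arguments ends_open {Y}.

Section EATree.
Variables (X : Type) (d : X -> X -> R) (x0 : X).

Definition gprod (x y : X) : R := (d x0 x + d x0 y - d x y) / 2.

Fixpoint chain_min (x : X) (l : list X) (y : X) : R :=
  match l with
  | nil => gprod x y
  | z :: l' => Rmin (gprod x z) (chain_min z l' y)
  end.

Definition gprod' (x y : X) : R :=
  epsilon (inhabits 0)
    (fun s => is_lub (fun v => exists l, v = chain_min x l y) s).

Definition dprime (x y : X) : R := d x0 x + d x0 y - 2 * gprod' x y.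

Definition eclass (x : X) : X -> Prop := fun y => dprime x y = 0.

Definition TX : Type := { A : X -> Prop | exists x, A = eclass x }.

Definition eaf (x : X) : TX := exist _ (eclass x) (ex_intro _ x eq_refl).

Definition TX_rep (A : TX) : X :=
  proj1_sig (constructive_indefinite_description _ (proj2_sig A)).

Definition dstar (A B : TX) : R := dprime (TX_rep A) (TX_rep B).

End EATree.
Arguments gprod {X}. Arguments chain_min {X}. Arguments gprod' {X}.
Arguments dprime {X}. Arguments eclass {X}. Arguments TX {X}. Arguments eaf {X}.
Arguments TX_rep {X d x0}. Arguments dstar {X}.

(* Main.v *)
Require Import Defs.
From Stdlib Require Import Reals Lra Lia ZArith List ClassicalEpsilon ProofIrrelevance Classical.
Open Scope R_scope.

Section Main.
Variables (X : Type) (d : X -> X -> R) (x0 : X).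
Hypothesis Hmet : is_metric d.
Hypothesis Hgeo : geodesic d.

Local Notation G x y := (gprod' d x0 x y).
Local Notation gp x y := (gprod d x0 x y).
Local Notation dp := (dprime d x0).
Local Notation nx x := (d x0 x).

Lemma d_refl x : d x x = 0.
Proof. destruct Hmet as [H _]. apply H; reflexivity. Qed.
Lemma d_sym x y : d x y = d y x.
Proof. destruct Hmet as [_ [H _]]. apply H. Qed.
Lemma d_tri x y z : d x z <= d x y + d y z.
Proof. destruct Hmet as [_ [_ H]]. apply H. Qed.
Lemma d_pos x y : 0 <= d x y.
Proof. pose proof (d_tri x y x). rewrite d_refl, (d_sym y x) in H. lra. Qed.

Lemma gp_le_l x y : gp x y <= nx x.
Proof. unfold gprod. pose proof (d_tri x0 x y). lra. Qed.
Lemma gp_le_r x y : gp x y <= nx y.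
Proof. unfold gprod. pose proof (d_tri x0 y x). rewrite (d_sym y x) in H. lra. Qed.
Lemma gp_sym x y : gp x y = gp y x.
Proof. unfold gprod. rewrite (d_sym x y). lra. Qed.
Lemma gp_x0 y : gp x0 y = 0.
Proof. unfold gprod. rewrite d_refl. lra. Qed.
Lemma gp_self x : gp x x = nx x.
Proof. unfold gprod. rewrite d_refl. lra. Qed.

Lemma cm_le_l x l y : chain_min d x0 x l y <= nx x.
Proof. destruct l; simpl. apply gp_le_l. eapply Rle_trans. apply Rmin_l. apply gp_le_l. Qed.
Lemma cm_le_r x l y : chain_min d x0 x l y <= nx y.
Proof. revert x; induction l; intros x; simpl. apply gp_le_r.
  eapply Rle_trans. apply Rmin_r. apply IHl. Qed.
Lemma cm_app x l1 y l2 z :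
  chain_min d x0 x (l1 ++ y :: l2) z = Rmin (chain_min d x0 x l1 y) (chain_min d x0 y l2 z).
Proof. revert x; induction l1; intros x; simpl. reflexivity.
  rewrite IHl1. apply Rmin_assoc. Qed.
Lemma cm_rev x l y : chain_min d x0 x l y = chain_min d x0 y (rev l) x.
Proof. revert x; induction l; intros x; simpl. apply gp_sym.
  rewrite IHl, cm_app. simpl. rewrite Rmin_comm, gp_sym. reflexivity. Qed.

Lemma G_lub x y : is_lub (fun v => exists l, v = chain_min d x0 x l y) (G x y).
Proof.
  unfold gprod'. apply epsilon_spec.
  destruct (completeness (fun v => exists l, v = chain_min d x0 x l y)) as [m Hm].
  - exists (nx x). intros v [l ->]. apply cm_le_l.
  - exists (gp x y). exists nil. reflexivity.
  - exists m; exact Hm.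
Qed.

Lemma cm_le_G x l y : chain_min d x0 x l y <= G x y.
Proof. apply (proj1 (G_lub x y)). eauto. Qed.
Lemma gp_le_G x y : gp x y <= G x y.
Proof. apply (cm_le_G x nil y). Qed.
Lemma G_le_l x y : G x y <= nx x.
Proof. apply (proj2 (G_lub x y)). intros v [l ->]. apply cm_le_l. Qed.
Lemma G_le_r x y : G x y <= nx y.
Proof. apply (proj2 (G_lub x y)). intros v [l ->]. apply cm_le_r. Qed.
Lemma G_approx x y v : v < G x y -> exists l, v < chain_min d x0 x l y.
Proof.
  intros Hv. destruct (classic (exists l, v < chain_min d x0 x l y)) as [H|H]; auto.
  exfalso. assert (G x y <= v). { apply (proj2 (G_lub x y)). intros w [l ->].
  apply Rnot_lt_le. intro; apply H; eauto. } lra.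
Qed.
Lemma G_sym_le x y : G x y <= G y x.
Proof. apply (proj2 (G_lub x y)). intros w [l ->]. rewrite cm_rev. apply cm_le_G. Qed.
Lemma G_sym x y : G x y = G y x.
Proof. apply Rle_antisym; apply G_sym_le. Qed.
Lemma G_ultra x y z : Rmin (G x y) (G y z) <= G x z.
Proof.
  apply Rnot_lt_le; intro H.
  destruct (G_approx x y (G x z)) as [l1 H1]. eapply Rlt_le_trans; [exact H| apply Rmin_l].
  destruct (G_approx y z (G x z)) as [l2 H2]. eapply Rlt_le_trans; [exact H| apply Rmin_r].
  pose proof (cm_le_G x (l1 ++ y :: l2) z). rewrite cm_app in H0.
  pose proof (Rmin_glb_lt _ _ _ H1 H2). lra.
Qed.
Lemma G_ultra' x y z r : r <= G x y -> r <= G y z -> r <= G x z.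
Proof. intros. eapply Rle_trans; [|apply (G_ultra x y z)]. apply Rmin_glb; auto. Qed.
Lemma G_x0 y : G x0 y = 0.
Proof. apply Rle_antisym. pose proof (G_le_l x0 y). rewrite d_refl in H; auto.
  rewrite <- (gp_x0 y). apply gp_le_G. Qed.
Lemma G_self x : G x x = nx x.
Proof. apply Rle_antisym. apply G_le_l. rewrite <- gp_self. apply gp_le_G. Qed.

Lemma dp_eq x y : dp x y = nx x + nx y - 2 * G x y.
Proof. reflexivity. Qed.
Lemma G_eq x y : G x y = (nx x + nx y - dp x y) / 2.
Proof. rewrite dp_eq. lra. Qed.
Lemma dp_sym x y : dp x y = dp y x.
Proof. rewrite !dp_eq, G_sym. lra. Qed.
Lemma dp_self x : dp x x = 0.
Proof. rewrite dp_eq, G_self. lra. Qed.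
Lemma dp_nonneg x y : 0 <= dp x y.
Proof. rewrite dp_eq. pose proof (G_le_l x y). pose proof (G_le_r x y). lra. Qed.
Lemma dp_le_d x y : dp x y <= d x y.
Proof. rewrite dp_eq. pose proof (gp_le_G x y). unfold gprod in H. lra. Qed.
Lemma dp_x0 y : dp x0 y = nx y.
Proof. rewrite dp_eq, G_x0, d_refl. lra. Qed.
Lemma dp_tri x y z : dp x z <= dp x y + dp y z.
Proof.
  rewrite !dp_eq. pose proof (G_ultra x y z). pose proof (G_le_r x y). pose proof (G_le_l y z).
  unfold Rmin in H. destruct (Rle_dec (G x y) (G y z)); lra.
Qed.
Lemma dp_inv_l x x' y : dp x x' = 0 -> dp x y = dp x' y.
Proof. intros H. pose proof (dp_tri x x' y). pose proof (dp_tri x' x y).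
  pose proof H as H'. rewrite dp_sym in H'. lra. Qed.
Lemma nx_inv x x' : dp x x' = 0 -> nx x = nx x'.
Proof. intros H. rewrite <- (dp_x0 x), <- (dp_x0 x'), (dp_sym x0 x), (dp_sym x0 x'). apply dp_inv_l; auto. Qed.
Lemma G_inv_l x x' y : dp x x' = 0 -> G x y = G x' y.
Proof. intros H. rewrite !G_eq, (nx_inv x x' H), (dp_inv_l x x' y H). reflexivity. Qed.
Lemma G_inv_r x y y' : dp y y' = 0 -> G x y = G x y'.
Proof. intros H. rewrite (G_sym x y), (G_sym x y'). apply G_inv_l; auto. Qed.


Local Notation f := (eaf d x0).
Local Notation rep := (@TX_rep X d x0).
Local Notation dT := (dstar d x0).
Local Notation t0 := (eaf d x0 x0).

Lemma sig_eq_pi (T : Type) (P : T -> Prop) (a b : sig P) : proj1_sig a = proj1_sig b -> a = b.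
Proof. destruct a, b; simpl; intros ->; f_equal; apply proof_irrelevance. Qed.

Lemma rep_spec (A : TX d x0) : proj1_sig A = eclass d x0 (rep A).
Proof. unfold TX_rep. exact (proj2_sig (constructive_indefinite_description _ (proj2_sig A))). Qed.

Lemma f_rep A : f (rep A) = A.
Proof. apply sig_eq_pi. simpl. symmetry. apply rep_spec. Qed.
Lemma rep_f x : dp x (rep (f x)) = 0.
Proof. pose proof (rep_spec (f x)) as H. simpl in H.
  assert (E : eclass d x0 x (rep (f x))). { rewrite H. unfold eclass. apply dp_self. }
  exact E. Qed.
Lemma rep_f' x : dp (rep (f x)) x = 0.
Proof. rewrite dp_sym. apply rep_f. Qed.
Lemma dT_f x y : dT (f x) (f y) = dp x y.
Proof. unfold dstar. rewrite (dp_inv_l _ _ _ (rep_f' x)), dp_sym, (dp_inv_l _ _ _ (rep_f' y)).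
  apply dp_sym. Qed.
Lemma nT A : dT t0 A = nx (rep A).
Proof. unfold dstar. rewrite (dp_inv_l _ _ _ (rep_f' x0)). apply dp_x0. Qed.
Lemma nTf x : dT t0 (f x) = nx x.
Proof. rewrite dT_f. apply dp_x0. Qed.
Lemma G_repf_l a y : G (rep (f a)) y = G a y.
Proof. apply G_inv_l. apply rep_f'. Qed.
Lemma G_repf_r a y : G y (rep (f a)) = G y a.
Proof. apply G_inv_r. apply rep_f'. Qed.

Lemma cont_ext {Y} (dY : Y -> Y -> R) I (h h' : R -> Y) :
  (forall s, I s -> h s = h' s) -> cont_on dY I h' -> cont_on dY I h.
Proof. intros E C t It eps He. destruct (C t It eps He) as [del [Hd H]]. exists del; split; auto.
  intros s Is Hs. rewrite !E; auto. Qed.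
Lemma cont_sub {Y} (dY : Y -> Y -> R) (I J : R -> Prop) (h : R -> Y) :
  (forall s, J s -> I s) -> cont_on dY I h -> cont_on dY J h.
Proof. intros HJ C t Jt eps He. destruct (C t (HJ t Jt) eps He) as [del [Hd H]].
  exists del; split; auto. Qed.
Lemma cont_aff {Y} (dY : Y -> Y -> R) I J (c : R -> Y) a b : 0 < a ->
  (forall s, J s -> I (a*s+b)) -> cont_on dY I c -> cont_on dY J (fun s => c (a*s+b)).
Proof. intros Ha HJ C t Jt eps He. destruct (C (a*t+b) (HJ t Jt) eps He) as [del [Hd H]].
  exists (del / a). split. apply Rdiv_lt_0_compat; auto.
  intros s Js Hs. apply H; auto. replace (a*s+b - (a*t+b)) with (a*(s-t)) by ring.
  rewrite Rabs_mult, (Rabs_pos_eq a) by lra.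
  replace del with (a*(del/a)) by (field; lra). apply Rmult_lt_compat_l; auto. Qed.
Lemma cont_glue {Y} (dY : Y -> Y -> R) (h : R -> Y) a m b :
  cont_on dY (fun s => a <= s <= m) h -> cont_on dY (fun s => m <= s <= b) h ->
  cont_on dY (fun s => a <= s <= b) h.
Proof.
  intros C1 C2 t Ht eps He.
  destruct (total_order_T t m) as [[Hlt|Heq]|Hgt].
  - destruct (C1 t ltac:(lra) eps He) as [d1 [Hd1 H1]].
    exists (Rmin d1 (m - t)). split. apply Rmin_glb_lt; lra.
    intros s Hs Hst. pose proof (Rmin_l d1 (m-t)). pose proof (Rmin_r d1 (m-t)).
    apply Rabs_def2 in Hst. apply H1. lra. apply Rabs_def1; lra.
  - destruct (C1 t ltac:(lra) eps He) as [d1 [Hd1 H1]].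
    destruct (C2 t ltac:(lra) eps He) as [d2 [Hd2 H2]].
    exists (Rmin d1 d2). split. apply Rmin_glb_lt; lra.
    intros s Hs Hst. pose proof (Rmin_l d1 d2). pose proof (Rmin_r d1 d2).
    apply Rabs_def2 in Hst. destruct (Rle_dec s m).
    + apply H1. lra. apply Rabs_def1; lra.
    + apply H2. lra. apply Rabs_def1; lra.
  - destruct (C2 t ltac:(lra) eps He) as [d1 [Hd1 H1]].
    exists (Rmin d1 (t - m)). split. apply Rmin_glb_lt; lra.
    intros s Hs Hst. pose proof (Rmin_l d1 (t-m)). pose proof (Rmin_r d1 (t-m)).
    apply Rabs_def2 in Hst. apply H1. lra. apply Rabs_def1; lra.
Qed.

Lemma cont_d_dp I c : cont_on d I c -> cont_on dp I c.
Proof. intros C t It eps He. destruct (C t It eps He) as [del [Hd H]]. exists del; split; auto.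
  intros s Is Hs. eapply Rle_lt_trans. apply dp_le_d. auto. Qed.

Lemma path_trans S a b c : path_conn d S a b -> path_conn d S b c -> path_conn d S a c.
Proof.
  intros [c1 [C1 [E10 [E11 S1]]]] [c2 [C2 [E20 [E21 S2]]]].
  exists (fun s => if Rle_dec s (1/2) then c1 (2*s) else c2 (2*s-1)).
  split; [|split; [|split]].
  - apply cont_glue with (1/2).
    + apply cont_ext with (fun s => c1 (2*s+0)).
      { intros s Hs. destruct (Rle_dec s (1/2)); [|lra]. f_equal; ring. }
      apply cont_aff with (fun s => 0 <= s <= 1); auto. lra. intros; lra.
    + apply cont_ext with (fun s => c2 (2*s+ -1)).
      { intros s Hs. destruct (Rle_dec s (1/2)).
        - assert (s = 1/2) by lra. subst s. replace (2*(1/2)) with 1 by field.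
          replace (1+-1) with 0 by ring. congruence.
        - f_equal; ring. }
      apply cont_aff with (fun s => 0 <= s <= 1); auto. lra. intros; lra.
  - destruct (Rle_dec 0 (1/2)); [|lra]. rewrite Rmult_0_r; auto.
  - destruct (Rle_dec 1 (1/2)); [lra|]. replace (2*1-1) with 1 by ring; auto.
  - intros s Hs. destruct (Rle_dec s (1/2)). apply S1; lra. apply S2; lra.
Qed.

Lemma geo_path x y r : r <= gp x y -> path_conn d (outside_ball d x0 r) x y.
Proof.
  intros Hr. destruct (Hgeo x y) as [c [Ec0 [EcL Hc]]].
  set (L := d x y) in *. assert (HL : 0 <= L) by apply d_pos.
  exists (fun s => c (L * s)). split; [|split; [|split]].
  - intros t Ht eps He. exists (eps / (L+1)). split. apply Rdiv_lt_0_compat; lra.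
    intros s Hs Hst. rewrite Hc by nra.
    replace (L*s - L*t) with (L*(s-t)) by ring. rewrite Rabs_mult, (Rabs_pos_eq L) by lra.
    assert (Rabs (s-t) * (L+1) < eps).
    { apply Rmult_lt_reg_r with (/(L+1)). apply Rinv_0_lt_compat; lra.
      replace (Rabs (s - t) * (L + 1) * / (L + 1)) with (Rabs (s-t)) by (field; lra). exact Hst. }
    pose proof (Rabs_pos (s-t)). nra.
  - rewrite Rmult_0_r; auto.
  - rewrite Rmult_1_r; auto.
  - intros s Hs. unfold outside_ball. set (u := L*s).
    assert (Hu : 0 <= u <= L) by (unfold u; nra).
    assert (D1 : d x (c u) = u). { rewrite <- Ec0 at 1. rewrite Hc by lra. rewrite Rabs_left1 by lra. lra. }
    assert (D2 : d (c u) y = L - u). { rewrite <- EcL at 1. rewrite Hc by lra. rewrite Rabs_left1 by lra. lra. }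
    pose proof (d_tri x0 (c u) x). pose proof (d_tri x0 (c u) y).
    rewrite (d_sym (c u) x) in H. unfold gprod in Hr. fold L in Hr. lra.
Qed.

Lemma chain_path x l y r : r <= chain_min d x0 x l y -> path_conn d (outside_ball d x0 r) x y.
Proof.
  revert x; induction l as [|z l IH]; intros x H; simpl in H.
  - apply geo_path; auto.
  - apply path_trans with z. apply geo_path. eapply Rle_trans; [exact H|apply Rmin_l].
    apply IH. eapply Rle_trans; [exact H|apply Rmin_r].
Qed.

Lemma P1 x y r : r < G x y -> path_conn d (outside_ball d x0 r) x y.
Proof. intros H. destruct (G_approx x y r H) as [l Hl]. apply chain_path with l. lra. Qed.

Lemma P2 (c : R -> X) a b r : a <= b -> cont_on dp (fun s => a <= s <= b) c ->
  (forall s, a <= s <= b -> r <= nx (c s)) -> r <= G (c a) (c b).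
Proof.
  intros Hab Hc Hr.
  assert (Hca : r <= nx (c a)) by (apply Hr; lra).
  apply Rnot_lt_le; intro Hlt.
  set (eps := (r - G (c a) (c b)) / 2).
  assert (He : 0 < eps) by (unfold eps; lra).
  set (S := fun u => a <= u <= b /\ forall v, a <= v <= u -> r - eps <= G (c a) (c v)).
  assert (Sa : S a). { split. lra. intros v Hv. replace v with a by lra. rewrite G_self. lra. }
  destruct (completeness S) as [m [Hm1 Hm2]].
  { exists b. intros u [Hu _]. lra. }
  { exists a; exact Sa. }
  assert (ma : a <= m) by (apply Hm1; exact Sa).
  assert (mb : m <= b) by (apply Hm2; intros u [Hu _]; lra).
  destruct (Hc m ltac:(lra) eps He) as [del [Hd Hdel]].
  assert (Hu : exists u, S u /\ m - del < u).
  { apply NNPP; intro Hn. assert (m <= m - del). { apply Hm2. intros u Su. apply Rnot_lt_le. intro; apply Hn; eauto. } lra. }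
  destruct Hu as [u [Su Hu]].
  assert (um : u <= m) by (apply Hm1; exact Su).
  destruct Su as [[Su1 Su2] Su3].
  assert (Sw : S (Rmin (m + del/2) b)).
  { split. split. apply Rmin_glb; lra. apply Rmin_r.
    intros v Hv. destruct (Rle_dec v u) as [Hvu|Hvu].
    - apply Su3. lra.
    - assert (v <= m + del/2) by (pose proof (Rmin_l (m+del/2) b); lra).
      assert (v <= b) by (pose proof (Rmin_r (m+del/2) b); lra).
      assert (E1 : dp (c u) (c m) < eps) by (apply Hdel; [lra | apply Rabs_def1; lra]).
      assert (E2 : dp (c v) (c m) < eps) by (apply Hdel; [lra | apply Rabs_def1; lra]).
      assert (E3 : dp (c u) (c v) < 2*eps).
      { pose proof (dp_tri (c u) (c m) (c v)) as T. rewrite (dp_sym (c m)) in T. lra. }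
      apply G_ultra' with (c u). apply Su3; lra.
      rewrite G_eq. pose proof (Hr u ltac:(lra)). pose proof (Hr v ltac:(lra)). lra. }
  assert (Rmin (m + del/2) b <= m) by (apply Hm1; exact Sw).
  destruct (Rle_dec (m + del/2) b) as [Hle|Hle].
  - rewrite Rmin_left in H by lra. lra.
  - rewrite Rmin_right in Sw by lra.
    assert (r - eps <= G (c a) (c b)) by (apply (proj2 Sw); lra). unfold eps in *; lra.
Qed.


Lemma map_path r a b : path_conn d (outside_ball d x0 r) a b ->
  path_conn dT (outside_ball dT t0 r) (f a) (f b).
Proof. intros [c [C [E0 [E1 Sc]]]]. exists (fun s => f (c s)). split; [|split;[|split]].
  - intros t Ht eps He. destruct (C t Ht eps He) as [del [Hd H]]. exists del; split; auto.
    intros s Hs Hst. rewrite dT_f. eapply Rle_lt_trans. apply dp_le_d. auto.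
  - rewrite E0; auto.
  - rewrite E1; auto.
  - intros s Hs. unfold outside_ball. rewrite nTf. apply Sc; auto.
Qed.

Lemma P2X r a b : path_conn d (outside_ball d x0 r) a b -> r <= G a b.
Proof. intros [c [C [E0 [E1 Sc]]]]. rewrite <- E0, <- E1. apply P2. lra.
  apply cont_d_dp; auto. intros s Hs; apply Sc; auto. Qed.

Lemma P2T r A B : path_conn dT (outside_ball dT t0 r) A B -> r <= G (rep A) (rep B).
Proof. intros [c [C [E0 [E1 Sc]]]]. rewrite <- E0, <- E1.
  apply (P2 (fun s => rep (c s))). lra. exact C.
  intros s Hs. rewrite <- nT. apply Sc; auto. Qed.

Lemma X_spc_G g1 g2 t r : same_path_comp d (outside_ball d x0 r) (Defs.tail g1 t) (Defs.tail g2 t) ->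
  forall s s', 0 <= s -> t <= s -> 0 <= s' -> t <= s' -> r <= G (g1 s) (g2 s').
Proof. intros [_ [_ H]] s s' ? ? ? ?. apply P2X. apply H. exists s; auto. exists s'; auto. Qed.

Lemma T_spc_G b1 b2 t r : same_path_comp dT (outside_ball dT t0 r) (Defs.tail b1 t) (Defs.tail b2 t) ->
  forall s s', 0 <= s -> t <= s -> 0 <= s' -> t <= s' -> r <= G (rep (b1 s)) (rep (b2 s')).
Proof. intros [_ [_ H]] s s' ? ? ? ?. apply P2T. apply H. exists s; auto. exists s'; auto. Qed.

Lemma X_G_spc g1 g2 t r :
  (forall s s', 0 <= s -> t <= s -> 0 <= s' -> t <= s' -> r < G (g1 s) (g2 s')) ->
  same_path_comp d (outside_ball d x0 r) (Defs.tail g1 t) (Defs.tail g2 t).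
Proof. intros H. split; [|split].
  - exists (g1 (Rmax 0 t)), (Rmax 0 t). split. apply Rmax_l. split. apply Rmax_r. auto.
  - exists (g2 (Rmax 0 t)), (Rmax 0 t). split. apply Rmax_l. split. apply Rmax_r. auto.
  - intros a b [s [? [? ->]]] [s' [? [? ->]]]. apply P1. auto.
Qed.

Lemma T_G_spc b1 b2 t r :
  (forall s s', 0 <= s -> t <= s -> 0 <= s' -> t <= s' -> r < G (rep (b1 s)) (rep (b2 s'))) ->
  same_path_comp dT (outside_ball dT t0 r) (Defs.tail b1 t) (Defs.tail b2 t).
Proof. intros H. split; [|split].
  - exists (b1 (Rmax 0 t)), (Rmax 0 t). split. apply Rmax_l. split. apply Rmax_r. auto.
  - exists (b2 (Rmax 0 t)), (Rmax 0 t). split. apply Rmax_l. split. apply Rmax_r. auto.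
  - intros a b [s [? [? ->]]] [s' [? [? ->]]].
    rewrite <- (f_rep (b1 s)), <- (f_rep (b2 s')). apply map_path, P1. auto.
Qed.

Definition GE (h1 h2 : R -> X) := forall r, 0 <= r -> exists t, 0 <= t /\
  forall s s', 0 <= s -> t <= s -> 0 <= s' -> t <= s' -> r <= G (h1 s) (h2 s').

Lemma seX g1 g2 : same_end d x0 g1 g2 <-> GE g1 g2.
Proof. split.
  - intros H r Hr. destruct (H r Hr) as [t [Ht Hs]]. exists t; split; auto.
    exact (X_spc_G _ _ _ _ Hs).
  - intros H r Hr. destruct (H (r+1) ltac:(lra)) as [t [Ht Hs]]. exists t; split; auto.
    apply X_G_spc. intros. specialize (Hs s s' H0 H1 H2 H3). lra.
Qed.

Lemma seT b1 b2 : same_end dT t0 b1 b2 <-> GE (fun s => rep (b1 s)) (fun s => rep (b2 s)).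
Proof. split.
  - intros H r Hr. destruct (H r Hr) as [t [Ht Hs]]. exists t; split; auto.
    exact (T_spc_G _ _ _ _ Hs).
  - intros H r Hr. destruct (H (r+1) ltac:(lra)) as [t [Ht Hs]]. exists t; split; auto.
    apply T_G_spc. intros. specialize (Hs s s' H0 H1 H2 H3). simpl in Hs. lra.
Qed.

Lemma GE_sym h1 h2 : GE h1 h2 -> GE h2 h1.
Proof. intros H r Hr. destruct (H r Hr) as [t [Ht Hs]]. exists t; split; auto.
  intros. rewrite G_sym. auto. Qed.

Lemma GE_trans h1 h2 h3 : GE h1 h2 -> GE h2 h3 -> GE h1 h3.
Proof. intros H1 H2 r Hr. destruct (H1 r Hr) as [t1 [Ht1 Hs1]]. destruct (H2 r Hr) as [t2 [Ht2 Hs2]].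
  exists (Rmax t1 t2). split. eapply Rle_trans; [exact Ht1|apply Rmax_l].
  intros s s' ? ? ? ?. pose proof (Rmax_l t1 t2). pose proof (Rmax_r t1 t2).
  apply G_ultra' with (h2 (Rmax t1 t2)).
  apply Hs1; lra. apply Hs2; lra. Qed.

Lemma GE_congr h1 h1' h2 h2' : (forall s, dp (h1 s) (h1' s) = 0) -> (forall s, dp (h2 s) (h2' s) = 0) ->
  GE h1 h2 -> GE h1' h2'.
Proof. intros E1 E2 H r Hr. destruct (H r Hr) as [t [Ht Hs]]. exists t; split; auto.
  intros. rewrite <- (G_inv_l (h1 s) (h1' s)) by auto. rewrite <- (G_inv_r (h1 s) (h2 s')) by auto.
  auto. Qed.

Lemma seTf b g : same_end dT t0 b (fun t => f (g t)) <-> GE (fun s => rep (b s)) g.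
Proof. rewrite seT. split; apply GE_congr; intros; try apply dp_self. apply rep_f'. apply rep_f. Qed.

Lemma seTff g1 g2 : same_end dT t0 (fun t => f (g1 t)) (fun t => f (g2 t)) <-> GE g1 g2.
Proof. rewrite seT. split; apply GE_congr; intros; try apply rep_f'; apply rep_f. Qed.

Definition EC (hs : nat -> R -> X) (h : R -> X) := forall r, 0 <= r -> exists (N : nat -> R) (K : nat),
  forall n, (K <= n)%nat -> forall s s', 0 <= s -> N n <= s -> 0 <= s' -> N n <= s' -> r <= G (hs n s) (h s').

Lemma ecX gs g : end_conv d x0 gs g <-> EC gs g.
Proof. split.
  - intros H r Hr. destruct (H r Hr) as [N [K Hs]]. exists N, K. intros n Hn.
    exact (X_spc_G _ _ _ _ (Hs n Hn)).
  - intros H r Hr. destruct (H (r+1) ltac:(lra)) as [N [K Hs]]. exists N, K. intros n Hn.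
    apply X_G_spc. intros. specialize (Hs n Hn s s' H0 H1 H2 H3). lra.
Qed.

Lemma ecT bs b : end_conv dT t0 bs b <-> EC (fun n s => rep (bs n s)) (fun s => rep (b s)).
Proof. split.
  - intros H r Hr. destruct (H r Hr) as [N [K Hs]]. exists N, K. intros n Hn.
    exact (T_spc_G _ _ _ _ (Hs n Hn)).
  - intros H r Hr. destruct (H (r+1) ltac:(lra)) as [N [K Hs]]. exists N, K. intros n Hn.
    apply T_G_spc. intros. specialize (Hs n Hn s s' H0 H1 H2 H3). simpl in Hs. lra.
Qed.

Lemma EC_congr hs hs' h h' : (forall n s, dp (hs n s) (hs' n s) = 0) -> (forall s, dp (h s) (h' s) = 0) ->
  EC hs h -> EC hs' h'.
Proof. intros E1 E2 H r Hr. destruct (H r Hr) as [N [K Hs]]. exists N, K.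
  intros. rewrite <- (G_inv_l (hs n s) (hs' n s)) by auto. rewrite <- (G_inv_r (hs n s) (h s')) by auto.
  auto. Qed.

Lemma proper_f g : proper_ray d x0 g -> proper_ray dT t0 (fun t => f (g t)).
Proof. intros [C P]. split.
  - intros t Ht eps He. destruct (C t Ht eps He) as [del [Hd H]]. exists del; split; auto.
    intros s Hs Hst. rewrite dT_f. eapply Rle_lt_trans. apply dp_le_d. auto.
  - intros r Hr. destruct (P r Hr) as [M HM]. exists M. intros t Ht. rewrite nTf. auto.
Qed.


Lemma choice_fun {A B : Type} (P : A -> B -> Prop) :
  (forall a, exists b, P a b) -> exists F : A -> B, forall a, P a (F a).
Proof. intros H. exists (fun a => proj1_sig (constructive_indefinite_description _ (H a))).
  intros a. exact (proj2_sig (constructive_indefinite_description _ (H a))). Qed.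

Definition fl (t : R) : nat := Z.to_nat (Int_part t).
Lemma fl_spec t : 0 <= t -> INR (fl t) <= t < INR (fl t) + 1.
Proof. intros Ht. destruct (base_Int_part t) as [H1 H2]. unfold fl.
  assert (H3 : (-1 < Int_part t)%Z). { apply lt_IZR. simpl. lra. }
  rewrite INR_IZR_INZ, Z2Nat.id by lia. lra. Qed.

Lemma nat_cases m n s : INR m <= s < INR m + 1 -> INR n <= s <= INR n + 1 -> m = n \/ m = S n.
Proof. intros [H1 H2] [H3 H4].
  assert (A : (n < S m)%nat) by (apply INR_lt; rewrite S_INR; lra).
  assert (B : (m <= S n)%nat) by (apply INR_le; rewrite S_INR; lra). lia. Qed.

Lemma b_far (b : R -> TX d x0) R0 M : cont_on dT (fun t => 0 <= t) b ->
  (forall t, 0 <= t -> dT t0 (b t) < R0 -> t <= M) ->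
  forall u v, 0 <= u -> 0 <= v -> M < u -> M < v -> R0 <= G (rep (b u)) (rep (b v)).
Proof. intros C HM.
  assert (K : forall u v, 0 <= u -> M < u -> u <= v -> R0 <= G (rep (b u)) (rep (b v))).
  { intros u v H0 Hu Huv. apply (P2 (fun s => rep (b s))). auto.
    apply cont_sub with (fun t => 0 <= t). intros; lra. exact C.
    intros s Hs. rewrite <- nT. apply Rnot_lt_le. intro Hl. specialize (HM s ltac:(lra) Hl). lra. }
  intros u v ? ? ? ?. destruct (Rle_dec u v). auto. rewrite G_sym. apply K; lra.
Qed.

Lemma surj b : proper_ray dT t0 b -> exists g, proper_ray d x0 g /\ GE (fun s => rep (b s)) g.
Proof.
  intros [Cb Pb].
  set (xs := fun n : nat => rep (b (INR n))).
  assert (Hp : forall n, exists c : R -> X, cont_on d (fun s => 0 <= s <= 1) c /\ c 0 = xs n /\ c 1 = xs (S n) /\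
     forall s, 0 <= s <= 1 -> G (xs n) (xs (S n)) - 1 <= nx (c s)).
  { intros n. destruct (P1 (xs n) (xs (S n)) (G (xs n) (xs (S n)) - 1) ltac:(lra)) as [c [C [E0 [E1 Sc]]]].
    exists c; auto. }
  destruct (choice_fun _ Hp) as [p Hpp].
  set (g := fun t => p (fl t) (t - INR (fl t))).
  assert (Hon : forall n s, INR n <= s <= INR n + 1 -> g s = p n (s - INR n)).
  { intros n s Hs. unfold g. pose proof (fl_spec s ltac:(pose proof (pos_INR n); lra)) as Hf.
    destruct (nat_cases _ _ _ Hf Hs) as [E|E]; rewrite E. reflexivity.
    rewrite E, S_INR in Hf. rewrite S_INR.
    replace (s - (INR n + 1)) with 0 by lra. replace (s - INR n) with 1 by lra.
    destruct (Hpp (S n)) as [_ [E0 _]]. destruct (Hpp n) as [_ [_ [E1 _]]]. congruence. }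
  assert (Cn : forall k, cont_on d (fun s => 0 <= s <= INR k) g).
  { induction k as [|k IH].
    - intros t Ht eps He. simpl in Ht. exists 1. split. lra. intros s Hs _. simpl in Hs.
      replace s with t by lra. rewrite d_refl; lra.
    - rewrite S_INR. apply cont_glue with (INR k); auto.
      apply cont_ext with (fun s => p k (1*s + - INR k)).
      { intros s Hs. rewrite (Hon k s Hs). f_equal; ring. }
      apply cont_aff with (fun s => 0 <= s <= 1). lra. intros; lra. apply Hpp. }
  assert (Cg : cont_on d (fun t => 0 <= t) g).
  { intros t Ht eps He. pose proof (fl_spec t Ht) as Hf.
    destruct (Cn (fl t + 2)%nat t) with eps as [del [Hd H]]; auto.
    rewrite plus_INR. simpl. lra.
    exists (Rmin del 1). split. apply Rmin_glb_lt; lra.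
    intros s Hs Hst. pose proof (Rmin_l del 1). pose proof (Rmin_r del 1).
    apply Rabs_def2 in Hst as Hst'. apply H. rewrite plus_INR. simpl. lra. lra. }
  exists g. split; [split|].
  - exact Cg.
  - intros R0 HR0. destruct (Pb (R0+1) ltac:(lra)) as [M HM]. exists (Rmax M 0 + 1).
    intros t Ht Hlt. apply Rnot_lt_le; intro Hgt.
    pose proof (Rmax_l M 0). pose proof (Rmax_r M 0).
    pose proof (fl_spec t Ht) as Hf. set (n := fl t) in *.
    assert (Q : R0 + 1 <= G (xs n) (xs (S n))).
    { unfold xs. apply (b_far b _ M Cb HM). apply pos_INR. apply pos_INR. lra. rewrite S_INR; lra. }
    destruct (Hpp n) as [_ [_ [_ Sc]]].
    specialize (Sc (t - INR n) ltac:(lra)). unfold g in Hlt. fold n in Hlt. lra.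
  - intros r Hr. destruct (Pb (r+2) ltac:(lra)) as [M HM]. exists (Rmax M 0 + 2).
    pose proof (Rmax_l M 0). pose proof (Rmax_r M 0).
    split. lra. intros s s' Hs Hts Hs' Hts'.
    pose proof (fl_spec s' Hs') as Hf. set (n := fl s') in *.
    assert (A : r + 2 <= G (rep (b s)) (xs n)).
    { unfold xs. apply (b_far b _ M Cb HM); try lra; apply pos_INR. }
    assert (Q : r + 2 <= G (xs n) (xs (S n))).
    { unfold xs. apply (b_far b _ M Cb HM). apply pos_INR. apply pos_INR. lra. rewrite S_INR; lra. }
    destruct (Hpp n) as [Cp [E0 [E1 Sc]]].
    assert (B : r + 1 <= G (p n 0) (p n (s' - INR n))).
    { apply P2. lra. apply cont_d_dp. apply cont_sub with (fun s => 0 <= s <= 1). intros; lra. exact Cp.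
      intros u Hu. specialize (Sc u ltac:(lra)). lra. }
    rewrite E0 in B. unfold g. fold n.
    apply G_ultra' with (xs n); lra.
Qed.


Lemma main_sec :
  let f := eaf d x0 in
  let dT := dstar d x0 in
  let t0 := f x0 in
  (forall g, proper_ray d x0 g -> proper_ray dT t0 (fun t => f (g t))) /\
  (forall g1 g2, proper_ray d x0 g1 -> proper_ray d x0 g2 -> same_end d x0 g1 g2 ->
     same_end dT t0 (fun t => f (g1 t)) (fun t => f (g2 t))) /\
  (forall g1 g2, proper_ray d x0 g1 -> proper_ray d x0 g2 ->
     same_end dT t0 (fun t => f (g1 t)) (fun t => f (g2 t)) -> same_end d x0 g1 g2) /\
  (forall b, proper_ray dT t0 b ->
     exists g, proper_ray d x0 g /\ same_end dT t0 b (fun t => f (g t))) /\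
  (forall U, ends_open dT t0 U ->
     ends_open d x0 (fun g => proper_ray d x0 g /\ U (fun t => f (g t)))) /\
  (forall V, ends_open d x0 V ->
     ends_open dT t0 (fun b => proper_ray dT t0 b /\
        exists g, proper_ray d x0 g /\ V g /\ same_end dT t0 b (fun t => f (g t)))).
Proof.
  intros F dT' t0'. subst F dT' t0'.
  split; [|split; [|split; [|split; [|split]]]].
  - apply proper_f.
  - intros g1 g2 _ _ H. apply seTff, seX, H.
  - intros g1 g2 _ _ H. apply seX, seTff, H.
  - intros b Hb. destruct (surj b Hb) as [g [Hg HG]]. exists g; split; auto. apply seTf; auto.
  - intros U [U1 [U2 U3]]. split; [|split].
    + intros g [Hg _]; auto.
    + intros g g' Hg' Hs [Hg HU]. split; auto. apply U2 with (fun t => f (g t)); auto.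
      apply proper_f; auto. apply seTff, seX; auto.
    + intros gs g Hgs Hg Hc [_ HU].
      destruct (U3 (fun n t => f (gs n t)) (fun t => f (g t))) as [K HK].
      { intros; apply proper_f; auto. } { apply proper_f; auto. }
      { apply ecT. apply EC_congr with gs g; try (intros; apply rep_f). apply ecX; auto. }
      { auto. }
      exists K. intros n Hn. split; auto.
  - intros V [V1 [V2 V3]]. split; [|split].
    + intros b [Hb _]; auto.
    + intros b b' Hb' Hs [Hb [g [Hg [HV Hbg]]]]. split; auto. exists g. split; auto. split; auto.
      apply seTf. apply GE_trans with (fun s => rep (b s)). apply GE_sym. apply seT; auto. apply seTf; auto.
    + intros bs b Hbs Hb Hc [_ [g [Hg [HV Hbg]]]].
      assert (Hsel : forall n, exists gn, proper_ray d x0 gn /\ GE (fun s => rep (bs n s)) gn)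
        by (intros; apply surj; auto).
      destruct (choice_fun _ Hsel) as [gsel Hgsel].
      assert (HE : EC gsel g).
      { intros r Hr. apply ecT in Hc. destruct (Hc r Hr) as [N [K HK]].
        apply seTf in Hbg. destruct (Hbg r Hr) as [ts [Hts Hts2]].
        assert (Ht : forall n, exists t, 0 <= t /\ forall s s', 0 <= s -> t <= s -> 0 <= s' -> t <= s' ->
                      r <= G (rep (bs n s)) (gsel n s'))
          by (intros n; apply (proj2 (Hgsel n)); auto).
        destruct (choice_fun _ Ht) as [tn Htn].
        exists (fun n => Rmax (Rmax (N n) (tn n)) (Rmax ts 0)), K.
        intros n Hn s s' Hs0 Hs1 Hs0' Hs1'.
        pose proof (Rmax_l (Rmax (N n) (tn n)) (Rmax ts 0)).
        pose proof (Rmax_r (Rmax (N n) (tn n)) (Rmax ts 0)).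
        pose proof (Rmax_l (N n) (tn n)). pose proof (Rmax_r (N n) (tn n)).
        pose proof (Rmax_l ts 0). pose proof (Rmax_r ts 0).
        set (u := Rmax (Rmax (N n) (tn n)) (Rmax ts 0)) in *.
        apply G_ultra' with (rep (bs n u)).
        - rewrite G_sym. apply (proj2 (Htn n)); lra.
        - apply G_ultra' with (rep (b u)). apply HK; try lra; auto. apply Hts2; lra. }
      destruct (V3 gsel g) as [K HK].
      { intros; apply Hgsel. } { auto. } { apply ecX; auto. } { auto. }
      exists K. intros n Hn. split. apply Hbs. exists (gsel n). split. apply Hgsel. split. auto.
      apply seTf. apply Hgsel.
Qed.

End Main.

Theorem proposition6p20 (X : Type) (d : X -> X -> R) (x0 : X)
  (Hmet : is_metric d) (Hprop : proper_space d) (Hgeo : geodesic d) :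
  let f := eaf d x0 in
  let dT := dstar d x0 in
  let t0 := f x0 in
  (* f o gamma is a proper ray in T_X *)
  (forall g, proper_ray d x0 g -> proper_ray dT t0 (fun t => f (g t))) /\
  (* F is well defined *)
  (forall g1 g2, proper_ray d x0 g1 -> proper_ray d x0 g2 -> same_end d x0 g1 g2 ->
     same_end dT t0 (fun t => f (g1 t)) (fun t => f (g2 t))) /\
  (* F is injective *)
  (forall g1 g2, proper_ray d x0 g1 -> proper_ray d x0 g2 ->
     same_end dT t0 (fun t => f (g1 t)) (fun t => f (g2 t)) -> same_end d x0 g1 g2) /\
  (* F is surjective *)
  (forall b, proper_ray dT t0 b ->
     exists g, proper_ray d x0 g /\ same_end dT t0 b (fun t => f (g t))) /\
  (* F is continuous *)
  (forall U, ends_open dT t0 U ->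
     ends_open d x0 (fun g => proper_ray d x0 g /\ U (fun t => f (g t)))) /\
  (* F^{-1} is continuous *)
  (forall V, ends_open d x0 V ->
     ends_open dT t0 (fun b => proper_ray dT t0 b /\
        exists g, proper_ray d x0 g /\ V g /\ same_end dT t0 b (fun t => f (g t)))).
Proof. exact (main_sec X d x0 Hmet Hgeo). Qed.
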